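(* Let $A\in\mathbb{R}^{m\times n}$ with columns $A_1,\dots,A_n$, let $y\in\mathbb{R}^m$, $\gamma>0$ and $\mu\ge 0$. Let $x^*$ be an optimal solution of (CR) with optimal value $\zeta_{CR}$, set $\varepsilon^*=y-Ax^*$ and $\delta_i=(A_i'\varepsilon^* )^2$ for $i=1,\dots,n$, and let $\bar\zeta$ be any number with $\bar\zeta\ge\zeta_R$. Then every optimal solution $(x,z)$ of (MIPR) satisfies, for each $i$: $z_i=0$ if $\zeta_{CR}+\mu-\gamma\delta_i>\bar\zeta$, and $z_i=1$ if $\zeta_{CR}-\mu+\gamma\delta_i>\bar\zeta$.
   Context: For $x_i\in\mathbb{R}$, $z_i\ge 0$ the perspective term $x_i^2/z_i$ is defined with the convention $x_i^2/z_i=0$ if $x_i=z_i=0$ and $x_i^2/z_i=+\infty$ if $z_i=0$, $x_i\neq 0$. (MIPR) is the problem $\zeta_R=\min_{x,z}\ \|y-Ax\|_2^2+\frac1\gamma\sum_{i=1}^n \frac{x_i^2}{z_i}+\mu\sum_{i=1}^n z_i$ subject to $x_i(1-z_i)=0$ for $i=1,\dots,n$, $x\in\mathbb{R}^n$, $z\in\{0,1\}^n$ (a mixed-integer formulation of $\min_x \|y-Ax\|_2^2+\frac1\gamma\|x\|_2^2+\mu\|x\|_0$). (CR) is its convex (perspective) relaxation: $\zeta_{CR}=\min_{x,z}\ \|y-Ax\|_2^2+\frac1\gamma\sum_{i=1}^n \frac{x_i^2}{z_i}+\mu\sum_{i=1}^n z_i$ subject to $x\in\mathbb{R}^n$, $z\in[0,1]^n$;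 an optimal solution $x^*$ means the $x$-part of an optimal pair $(x^*,z^* )$. $A_i'$ denotes the transpose of the $i$-th column of $A$. *)

(* Defs.v *)
From HB Require Import structures.
From mathcomp Require Import all_boot all_order all_algebra.
From mathcomp Require Import all_classical all_reals ereal.
Set Implicit Arguments. Unset Strict Implicit. Unset Printing Implicit Defensive.
Import Order.TTheory GRing.Theory Num.Theory.
Local Open Scope ring_scope.
Local Open Scope ereal_scope.
Local Open Scope classical_set_scope.

Definition persp (R : realType) (xi zi : R) : \bar R :=
  if zi == 0%R then (if xi == 0%R then 0 else +oo) else ((xi ^+ 2 / zi)%R)%:E.

Definition sqnorm (R : realType) (m : nat) (v : 'cV[R]_m) : R :=
  (\sum_(j < m) v j ord0 ^+ 2)%R.

(* common objective of (MIPR) and (CR) *)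
Definition obj (R : realType) (m n : nat) (A : 'M[R]_(m, n)) (y : 'cV[R]_m)
    (gamma mu : R) (x z : 'cV[R]_n) : \bar R :=
  (sqnorm (y - A *m x))%:E
  + (gamma^-1)%:E * (\sum_(i < n) persp (x i ord0) (z i ord0))
  + ((mu * \sum_(i < n) z i ord0)%R)%:E.

Definition CR_feasible (R : realType) (n : nat) (x z : 'cV[R]_n) : Prop :=
  forall i, (0 <= z i ord0 <= 1)%R.

Definition MIPR_feasible (R : realType) (n : nat) (x z : 'cV[R]_n) : Prop :=
  forall i, (z i ord0 = 0%R \/ z i ord0 = 1%R) /\ (x i ord0 * (1 - z i ord0) = 0)%R.

Definition CR_optimal (R : realType) (m n : nat) (A : 'M[R]_(m, n)) (y : 'cV[R]_m)
    (gamma mu : R) (x z : 'cV[R]_n) : Prop :=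
  CR_feasible x z /\
  forall x' z', CR_feasible x' z' -> obj A y gamma mu x z <= obj A y gamma mu x' z'.

Definition MIPR_optimal (R : realType) (m n : nat) (A : 'M[R]_(m, n)) (y : 'cV[R]_m)
    (gamma mu : R) (x z : 'cV[R]_n) : Prop :=
  MIPR_feasible x z /\
  forall x' z', MIPR_feasible x' z' -> obj A y gamma mu x z <= obj A y gamma mu x' z'.

Definition zeta_R (R : realType) (m n : nat) (A : 'M[R]_(m, n)) (y : 'cV[R]_m)
    (gamma mu : R) : \bar R :=
  ereal_inf [set v | exists (x z : 'cV[R]_n),
               MIPR_feasible x z /\ obj A y gamma mu x z = v].

Definition delta (R : realType) (m n : nat) (A : 'M[R]_(m, n)) (eps : 'cV[R]_m)
    (i : 'I_n) : R :=
  (((col i A)^T *m eps) ord0 ord0 ^+ 2)%R.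

(* Main.v *)
Require Import Defs.
From HB Require Import structures.
From mathcomp Require Import all_boot all_order all_algebra.
From mathcomp Require Import all_classical all_reals ereal.
From mathcomp Require Import ring lra.
Import Order.TTheory GRing.Theory Num.Theory.
Local Open Scope ring_scope.
Local Open Scope ereal_scope.
Set Implicit Arguments. Unset Strict Implicit.
Local Open Scope ring_scope.

Definition Pr {R : realType} (s w : R) : R := s ^+ 2 / w.

Definition Fobj (R : realType) (m n : nat) (A : 'M[R]_(m, n)) (y : 'cV[R]_m)
    (gamma mu : R) (x z : 'cV[R]_n) : R :=
  sqnorm (y - A *m x) + gamma^-1 * (\sum_(i < n) Pr (x i ord0) (z i ord0))
  + mu * \sum_(i < n) z i ord0.

Definition good (R : realType) (n : nat) (x z : 'cV[R]_n) : Prop :=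
  forall j, z j ord0 = 0 -> x j ord0 = 0.

Lemma perspE (R : realType) (s w : R) : (w = 0 -> s = 0) -> persp s w = (Pr s w)%:E.
Proof.
move=> h; rewrite /persp /Pr; case: eqP => [w0|//].
by rewrite (h w0) eqxx w0 expr0n /= mul0r.
Qed.

Lemma objE (R : realType) (m n : nat) (A : 'M[R]_(m, n)) (y : 'cV[R]_m)
    (gamma mu : R) (x z : 'cV[R]_n) :
  good x z -> obj A y gamma mu x z = (Fobj A y gamma mu x z)%:E.
Proof.
move=> g; rewrite /obj /Fobj.
rewrite (eq_bigr (fun i => (Pr (x i ord0) (z i ord0))%:E)%E); last first.
  by move=> i _; apply: perspE; apply: g.
by rewrite sumEFin -EFinM -!EFinD.
Qed.

Lemma persp_ge0 (R : realType) (s w : R) : (0 <= w) -> (0 <= persp s w)%E.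
Proof.
move=> w0; rewrite /persp; case: eqP => _; first by case: eqP.
by rewrite lee_fin divr_ge0 // sqr_ge0.
Qed.

Lemma good_of_finite (R : realType) (m n : nat) (A : 'M[R]_(m, n)) (y : 'cV[R]_m)
    (gamma mu : R) (x z : 'cV[R]_n) (r : R) :
  (0 < gamma) -> CR_feasible x z -> (obj A y gamma mu x z <= r%:E)%E -> good x z.
Proof.
move=> gp feas hle j zj0; apply/eqP; apply: contraTT hle => xj0.
rewrite -ltNge.
have S : (\sum_(i < n) persp (x i ord0) (z i ord0) = +oo)%E.
  rewrite (bigD1 j) //= {1}/persp zj0 eqxx (negbTE xj0) addye //.
  apply/negP=> /eqP h.
  have : (0 <= \sum_(i < n | i != j) persp (x i ord0) (z i ord0))%E.
    by apply: sume_ge0 => i _; apply: persp_ge0; case/andP: (feas i).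
  by rewrite h.
rewrite /obj S gt0_muley ?lte_fin ?invr_gt0 //.
by rewrite addey // addye // ltry.
Qed.
Lemma small_t (R : realFieldType) (b c : R) :
  (forall t, 0 < t -> t < 1 -> 0 <= b + t * c) -> 0 <= b.
Proof.
move=> H; rewrite leNgt; apply/negP => bneg.
have := H (2^-1) ltac:(by rewrite invr_gt0) ltac:(by rewrite invf_lt1 // ltr1n).
move=> h2.
have cpos : 0 < c.
  have e : 2^-1 * c * 2 = c by rewrite mulrAC mulVf ?mul1r // pnatr_eq0.
  by rewrite -e; nra.
have cb : 0 < c - b by lra.
pose t0 := - b / (c - b).
have e : t0 * (c - b) = - b by rewrite /t0 divfK // gt_eqF.
have t0p : 0 < t0 by rewrite /t0 divr_gt0 // oppr_gt0.
have t01 : t0 < 1 by rewrite /t0 ltr_pdivrMr // mul1r; lra.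
have := H t0 t0p t01.
nra.
Qed.

Lemma persp_conv1 (R : realType) (s w u t : R) :
  0 <= w -> (w = 0 -> s = 0) -> 0 < t -> t < 1 ->
  Pr ((1 - t) * s + t * u) ((1 - t) * w + t) <= (1 - t) * Pr s w + t * u ^+ 2.
Proof.
move=> w0 ws t0 t1; rewrite /Pr.
have [w00|wn0] := eqVneq w 0.
  rewrite w00 (ws w00) ?mulr0 ?add0r ?expr0n /= ?mul0r ?mulr0 ?add0r.
  have tn : t != 0 by rewrite gt_eqF.
  by rewrite le_eqVlt; apply/orP; left; apply/eqP; field.
have wp : 0 < w by rewrite lt_neqAle eq_sym wn0.
pose p := s / w.
have sE : s = p * w by rewrite /p divfK.
have E1 : s ^+ 2 / w = p ^+ 2 * w by rewrite sE; field.
rewrite E1 ler_pdivrMr; last by nra.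
rewrite sE -subr_ge0.
have -> : ((1 - t) * (p ^+ 2 * w) + t * u ^+ 2) * ((1 - t) * w + t) -
    ((1 - t) * (p * w) + t * u) ^+ 2 = (1 - t) * w * t * (p - u) ^+ 2 by ring.
apply: mulr_ge0; last exact: sqr_ge0.
apply: mulr_ge0; last lra.
apply: mulr_ge0; lra.
Qed.

Lemma persp_conv0 (R : realType) (s w t : R) :
  (w = 0 -> s = 0) -> t < 1 ->
  Pr ((1 - t) * s + t * 0) ((1 - t) * w + t * 0) = (1 - t) * Pr s w.
Proof.
move=> ws t1; rewrite /Pr !mulr0 !addr0.
have [w00|wn0] := eqVneq w 0.
  by rewrite w00 (ws w00) ?mulr0 ?expr0n /= ?mul0r ?mulr0.
have tn : 1 - t != 0 by rewrite subr_eq0 eq_sym lt_eqF.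
by field; rewrite wn0 tn.
Qed.
Definition mixv {R : realType} {n : nat} (v : 'cV[R]_n) (j : 'I_n) (b : R) : 'cV[R]_n :=
  \col_k (if k == j then b else v k ord0).

Lemma mixvE (R : realType) n (v : 'cV[R]_n) j b k :
  mixv v j b k ord0 = if k == j then b else v k ord0.
Proof. by rewrite mxE. Qed.

Lemma sum_mix (R : realType) n (f : R -> R -> R) (x z : 'cV[R]_n) j b c :
  \sum_(k < n) f (mixv x j b k ord0) (mixv z j c k ord0) =
  \sum_(k < n) f (x k ord0) (z k ord0) - f (x j ord0) (z j ord0) + f b c.
Proof.
rewrite (bigD1 j) //= [in RHS](bigD1 j) //= !mixvE eqxx.
rewrite (eq_bigr (fun k => f (x k ord0) (z k ord0))); last first.
  by move=> k kj; rewrite !mixvE (negbTE kj).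
lra.
Qed.

Definition aj {R : realType} {m n : nat} (A : 'M[R]_(m, n)) (e : 'cV[R]_m) (j : 'I_n) : R :=
  \sum_(k < m) A k j * e k ord0.

Lemma deltaE (R : realType) m n (A : 'M[R]_(m, n)) (e : 'cV[R]_m) j :
  delta A e j = aj A e j ^+ 2.
Proof.
rewrite /delta /aj !mxE; congr (_ ^+ 2); apply: eq_bigr => k _; by rewrite !mxE.
Qed.

Lemma entryE (R : realType) m n (A : 'M[R]_(m, n)) (y : 'cV[R]_m) (x : 'cV[R]_n) k :
  (y - A *m x) k ord0 = y k ord0 - \sum_(l < n) A k l * x l ord0.
Proof. by rewrite !mxE. Qed.

Lemma sq_mix (R : realType) m n (A : 'M[R]_(m, n)) (y : 'cV[R]_m) (x : 'cV[R]_n) j b :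
  sqnorm (y - A *m mixv x j b) = sqnorm (y - A *m x)
    - 2 * (b - x j ord0) * aj A (y - A *m x) j
    + (b - x j ord0) ^+ 2 * \sum_(k < m) A k j ^+ 2.
Proof.
set c := b - x j ord0.
have ent : forall k, (y - A *m mixv x j b) k ord0 = (y - A *m x) k ord0 - c * A k j.
  move=> k; rewrite !entryE (bigD1 j) //= [in RHS](bigD1 j) //= mixvE eqxx.
  rewrite (eq_bigr (fun l => A k l * x l ord0)); last first.
    by move=> l lj; rewrite mixvE (negbTE lj).
  rewrite /c; ring.
rewrite /sqnorm /aj.
rewrite (eq_bigr (fun k => (y - A *m x) k ord0 ^+ 2 - 2 * c * (A k j * (y - A *m x) k ord0)
    + c ^+ 2 * A k j ^+ 2)); last by move=> k _; rewrite ent; ring.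
by rewrite !big_split /= sumrN -!mulr_sumr.
Qed.

Lemma sq_lb (R : realType) m n (A : 'M[R]_(m, n)) (y : 'cV[R]_m) (x xs : 'cV[R]_n) :
  sqnorm (y - A *m xs) - 2 * \sum_(j < n) (x j ord0 - xs j ord0) * aj A (y - A *m xs) j
  <= sqnorm (y - A *m x).
Proof.
set e := y - A *m xs.
have ent : forall k, (y - A *m x) k ord0 =
    e k ord0 - \sum_(l < n) A k l * (x l ord0 - xs l ord0).
  move=> k; rewrite /e !entryE.
  have -> : \sum_(l < n) A k l * (x l ord0 - xs l ord0) =
     \sum_(l < n) A k l * x l ord0 - \sum_(l < n) A k l * xs l ord0.
    by rewrite -sumrB; apply: eq_bigr => l _; ring.
  ring.
have -> : \sum_(j < n) (x j ord0 - xs j ord0) * aj A e j =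
    \sum_(k < m) e k ord0 * \sum_(l < n) A k l * (x l ord0 - xs l ord0).
  rewrite /aj.
  rewrite (eq_bigr (fun j => \sum_(k < m) e k ord0 * (A k j * (x j ord0 - xs j ord0))));
    last by move=> j _; rewrite mulr_sumr; apply: eq_bigr => k _; ring.
  rewrite exchange_big /=; apply: eq_bigr => k _; by rewrite mulr_sumr.
rewrite /sqnorm mulr_sumr -sumrB; apply: ler_sum => k _.
rewrite ent; set q := \sum_(l < n) _.
nra.
Qed.
Lemma sum_mix1 (R : realType) n (x z : 'cV[R]_n) j (b c : R) :
  \sum_(k < n) mixv z j c k ord0 = \sum_(k < n) z k ord0 - z j ord0 + c.
Proof. exact: (sum_mix (fun _ w => w) x z j b c). Qed.

Definition Hf {R : realType} (gamma mu s w : R) : R := gamma^-1 * Pr s w + mu * w.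

Lemma coord_opt (R : realType) m n (A : 'M[R]_(m, n)) (y : 'cV[R]_m) (gamma mu : R)
    (xs zs : 'cV[R]_n) j (u v : R) :
  0 < gamma -> CR_optimal A y gamma mu xs zs -> good xs zs ->
  ((v = 0 /\ u = 0) \/ v = 1) ->
  2 * aj A (y - A *m xs) j * (u - xs j ord0)
    <= Hf gamma mu u v - Hf gamma mu (xs j ord0) (zs j ord0).
Proof.
move=> gp [feas opt] gd huv.
have /andP[w0 w1] := feas j.
have wsj : zs j ord0 = 0 -> xs j ord0 = 0 := gd j.
rewrite -subr_ge0.
apply: (@small_t _ _ ((u - xs j ord0) ^+ 2 * \sum_(k < m) A k j ^+ 2)) => t t0 t1.
pose bx := (1 - t) * xs j ord0 + t * u.
pose bz := (1 - t) * zs j ord0 + t * v.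
have feast : CR_feasible (mixv xs j bx) (mixv zs j bz).
  move=> k; rewrite mixvE; case: eqP => _; last exact: feas.
  rewrite /bz; case: huv => [[-> _]|->]; apply/andP; split; nra.
have goodt : good (mixv xs j bx) (mixv zs j bz).
  move=> k; rewrite !mixvE; case: eqP => _; last exact: gd.
  rewrite /bz /bx; case: huv => [[-> ->]|->] h.
    have : zs j ord0 = 0.
      have tn : 1 - t != 0 by rewrite subr_eq0 eq_sym lt_eqF.
      by move: h; rewrite mulr0 addr0 => /eqP; rewrite mulf_eq0 (negbTE tn) => /eqP.
    by move=> /wsj ->; rewrite !mulr0 addr0.
  exfalso; nra.
have hP : Pr bx bz <= (1 - t) * Pr (xs j ord0) (zs j ord0) + t * Pr u v.
  rewrite /bx /bz; case: huv => [[-> ->]|->].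
    by rewrite persp_conv0 // /Pr expr0n /= mul0r mulr0 addr0.
  rewrite mulr1 {3}/Pr divr1; exact: persp_conv1.
have hG : gamma^-1 * Pr bx bz <=
    gamma^-1 * ((1 - t) * Pr (xs j ord0) (zs j ord0) + t * Pr u v).
  by rewrite ler_wpM2l // invr_ge0 ltW.
have := opt _ _ feast.
rewrite !objE // lee_fin /Fobj sq_mix (sum_mix Pr) (sum_mix1 xs zs j bx bz).
move=> hopt.
rewrite -(@pmulr_rge0 _ t) //.
rewrite /Hf /bx /bz in hG hopt *.
rewrite /aj in hopt *.
nra.
Qed.
Lemma FobjH (R : realType) m n (A : 'M[R]_(m, n)) (y : 'cV[R]_m) (gamma mu : R)
    (x z : 'cV[R]_n) :
  Fobj A y gamma mu x z = sqnorm (y - A *m x) + \sum_(j < n) Hf gamma mu (x j ord0) (z j ord0).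
Proof. by rewrite /Fobj /Hf big_split /= -!mulr_sumr addrA. Qed.

Lemma global_lb (R : realType) m n (A : 'M[R]_(m, n)) (y : 'cV[R]_m) (gamma mu : R)
    (xs zs x z : 'cV[R]_n) i :
  0 < gamma -> CR_optimal A y gamma mu xs zs -> good xs zs -> MIPR_feasible x z ->
  - 2 * aj A (y - A *m xs) i * (x i ord0 - xs i ord0)
    + Hf gamma mu (x i ord0) (z i ord0) - Hf gamma mu (xs i ord0) (zs i ord0)
  <= Fobj A y gamma mu x z - Fobj A y gamma mu xs zs.
Proof.
move=> gp cropt gd mf.
have uv : forall j, (z j ord0 = 0 /\ x j ord0 = 0) \/ z j ord0 = 1.
  move=> j; have [[h|h] h2] := mf j; last by right.
  by left; split => //; move: h2; rewrite h subr0 mulr1.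
have hsum : Hf gamma mu (x i ord0) (z i ord0) - Hf gamma mu (xs i ord0) (zs i ord0)
      - 2 * ((x i ord0 - xs i ord0) * aj A (y - A *m xs) i)
    <= \sum_(j < n) (Hf gamma mu (x j ord0) (z j ord0) - Hf gamma mu (xs j ord0) (zs j ord0)
      - 2 * ((x j ord0 - xs j ord0) * aj A (y - A *m xs) j)).
  rewrite (bigD1 i) //= lerDl; apply: sumr_ge0 => j _.
  have := @coord_opt _ _ _ A y gamma mu xs zs j (x j ord0) (z j ord0) gp cropt gd (uv j).
  lra.
rewrite !sumrB -mulr_sumr in hsum.
have := sq_lb A y x xs.
rewrite !FobjH.
lra.
Qed.

Lemma zero_good (R : realType) n : good (0 : 'cV[R]_n) 0.
Proof. by move=> j _; rewrite mxE. Qed.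

Lemma zero_feas (R : realType) n : CR_feasible (0 : 'cV[R]_n) 0.
Proof. by move=> j; rewrite mxE lexx ler01. Qed.

Local Open Scope ereal_scope.

Theorem proposition1 (R : realType) (m n : nat) (A : 'M[R]_(m, n)) (y : 'cV[R]_m)
    (gamma mu : R) (xs zs : 'cV[R]_n) (zbar : R) :
  (0 < gamma)%R -> (0 <= mu)%R ->
  CR_optimal A y gamma mu xs zs ->
  zeta_R A y gamma mu <= zbar%:E ->
  forall x z : 'cV[R]_n, MIPR_optimal A y gamma mu x z ->
  forall i : 'I_n,
    let zetaCR := obj A y gamma mu xs zs in
    let d := delta A (y - A *m xs) i in
    (zetaCR + (mu - gamma * d)%:E > zbar%:E -> z i ord0 = 0%R) /\
    (zetaCR + (- mu + gamma * d)%:E > zbar%:E -> z i ord0 = 1%R).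
Proof.
move=> gp mu0 cropt zR x z [mf mopt] i zetaCR d.
have gd : good xs zs.
  apply: (@good_of_finite _ _ _ A y gamma mu xs zs (Fobj A y gamma mu 0 0) gp cropt.1).
  by rewrite -objE ?zero_good //; apply: cropt.2; apply: zero_feas.
have gx : good x z.
  move=> j h; have [_ h2] := mf j; by move: h2; rewrite h subr0 mulr1.
have hx : (Fobj A y gamma mu x z <= zbar)%R.
  rewrite -lee_fin -objE //; apply: le_trans zR.
  apply/ereal_infP => v [x' [z' [f <-]]]; exact: mopt.
have lb := global_lb i gp cropt gd mf.
have c0 := @coord_opt _ _ _ A y gamma mu xs zs i 0 0 gp cropt gd (or_introl (conj erefl erefl)).
have c1 := @coord_opt _ _ _ A y gamma mu xs zs i (gamma * aj A (y - A *m xs) i) 1 gp cropt gd (or_intror erefl).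
rewrite /zetaCR /d objE // deltaE -!EFinD !lte_fin.
set a := aj A (y - A *m xs) i in lb c0 c1 *.
have gi : (gamma^-1 * gamma = 1)%R by rewrite mulVf // gt_eqF.
have P00 : Pr (0 : R) 0 = 0%R by rewrite /Pr expr0n /= mul0r.
have P1 : forall u : R, Pr u 1 = (u ^+ 2)%R by move=> u; rewrite /Pr divr1.
split => hlt.
- have [[h|h] _] := mf i => //; exfalso.
  move: lb c0; rewrite /Hf h P1 P00 => lb c0.
  have sq : (0 <= gamma^-1 * (x i ord0 - gamma * a) ^+ 2)%R.
    by apply: mulr_ge0; [rewrite invr_ge0 ltW | exact: sqr_ge0].
  have e : (gamma^-1 * (x i ord0 - gamma * a) ^+ 2 =
      gamma^-1 * x i ord0 ^+ 2 - 2 * a * x i ord0 + gamma * a ^+ 2)%R.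
    by field; rewrite gt_eqF.
  lra.
- have [[h|h] h2] := mf i => //; exfalso.
  have hx0 : x i ord0 = 0%R by move: h2; rewrite h subr0 mulr1.
  move: lb c1; rewrite /Hf h hx0 P1 P00 => lb c1.
  have e : (gamma^-1 * (gamma * a) ^+ 2 = gamma * a ^+ 2)%R by field; rewrite gt_eqF.
  lra.
Qed.
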